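(* Consider the rested multiarmed bandit model with $K$ arms and $M$ plays per slot described in the context, and assume all arms are finite-state, irreducible, aperiodic, rested Markov chains. Then under UCB-M (with any exploration constant $L>0$) there is a constant $C_{\mathbf{S,P,r}}$ depending on the state spaces, rewards and transition probabilities of the arms but not on time, such that for all $n$ $$\Big|R(n)-\Big(n\sum_{j=1}^M \mu^{j}- \sum_{i=1}^K \mu^i E[T^i(n)]\Big)\Big| \leq C_{\mathbf{S,P,r}}.$$
   Context: Model: There are $K$ arms indexed by $i\in\{1,\dots,K\}$. Arm $i$ is a discrete-time Markov chain on a finite state space $S^i$ with transition matrix $P^i$ and stationary distribution $\pi^i=(\pi^i_x)$; each state $x\in S^i$ carries a reward $r^i_x$. The arms are mutually independent. Time is slotted; in each slot $t$ the player selects a set $A(t)$ of exactly $M$ arms ($1\le M\le K$), observes their states and collects the sum of their rewards. In the rested model, an arm's state makes one transition according to $P^i$ each time it is played and stays frozen otherwise. The mean reward of arm $i$ is $\mu^i=\sum_{x}r^i_x\pi^i_x$, with arms indexed so that $\mu^1\ge\dots\ge\mu^M>\mu^{M+1}\ge\dots\ge\mu^K$. The regret up to time $n$ is $R(n)=n\sum_{j=1}^M\mu^j-E\big[\sum_{t=1}^n\sum_{i\in A(t)} r^i_{x^i(t)}\big]$, where $x^i(t)$ is the observed state of arm $i$ in slot $t$. $T^i(n)$ denotes the total number of slots up to the end of slot $n$ in which arm $i$ is played. UCB-M with exploration constant $L>0$: in the first $K$ slots every arm is played exactly $M$ times ($M$ distinct arms per slot). For $t\ge K$, with $\bar r^i(T^i(t))$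 the sample mean of rewards from the $T^i(t)$ plays of arm $i$, compute $g^i_{t,T^i(t)}=\bar r^i(T^i(t))+\sqrt{L\ln t/T^i(t)}$ and in slot $t+1$ play the $M$ arms with the highest indices. *)

(* Defs.v *)
From HB Require Import structures.
From mathcomp Require Import all_boot all_order all_algebra.
From mathcomp Require Import reals exp.
Set Implicit Arguments. Unset Strict Implicit. Unset Printing Implicit Defensive.
Import Order.TTheory GRing.Theory Num.Theory.
Local Open Scope ring_scope.

Section MarkovChains.
Variable R : realType.

Definition stochastic (S : finType) (P : S -> S -> R) : Prop :=
  (forall x y, 0 <= P x y) /\ (forall x, \sum_y P x y = 1).

Definition distribution (S : finType) (p : S -> R) : Prop :=
  (forall x, 0 <= p x) /\ \sum_x p x = 1.

Fixpoint mpow (S : finType) (P : S -> S -> R) (k : nat) : S -> S -> R :=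
  match k with
  | 0 => fun x y => (x == y)%:R
  | k.+1 => fun x y => \sum_z mpow P k x z * P z y
  end.

Definition irreducible (S : finType) (P : S -> S -> R) : Prop :=
  forall x y, exists k, 0 < mpow P k x y.

Definition aperiodic (S : finType) (P : S -> S -> R) : Prop :=
  forall x (d : nat),
    (forall k : nat, (0 < k)%N -> 0 < mpow P k x x -> (d %| k)%N) -> d = 1%N.

Definition stationary (S : finType) (P : S -> S -> R) (pi : S -> R) : Prop :=
  distribution pi /\ (forall y, \sum_x pi x * P x y = pi y).

Definition mean_reward (S : finType) (r : S -> R) (pi : S -> R) : R :=
  \sum_x r x * pi x.

End MarkovChains.

Section Bandit.
Variable R : realType.
Variable K : nat.
Variable S : 'I_K -> finType.

(** A selection rule: given the number [t] of completed slots, the play counts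
    [T i] and the reward sums [Sm i] of each arm, the set of arms played in
    slot [t+1]. *)
Definition selector := nat -> ('I_K -> nat) -> ('I_K -> R) -> {set 'I_K}.

Definition ucb_index (L : R) (t : nat) (T : 'I_K -> nat) (Sm : 'I_K -> R)
  (i : 'I_K) : R :=
  Sm i / (T i)%:R + Num.sqrt (L * ln (t%:R) / (T i)%:R).

(** [sel] implements UCB-M with exploration constant [L]: in the first K
    slots it follows the fixed schedule [sched] (M distinct arms per slot,
    every arm played exactly M times); afterwards (t >= K) it plays M arms
    with highest indices (ties broken arbitrarily by [sel]). *)
Definition is_UCB_M (M : nat) (L : R) (sched : 'I_K -> {set 'I_K})
  (sel : selector) : Prop :=
  [/\ (forall s : 'I_K, #|sched s| = M),
      (forall i : 'I_K, #|[set s : 'I_K | i \in sched s]| = M),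
      (forall (s : 'I_K) T Sm, sel (nat_of_ord s) T Sm = sched s) &
      (forall (t : nat) T Sm, (K <= t)%N -> (forall i, (0 < T i)%N) ->
         #|sel t T Sm| = M /\
         (forall i j, i \in sel t T Sm -> j \notin sel t T Sm ->
            ucb_index L t T Sm j <= ucb_index L t T Sm i))].

(** Rested model: arm [i]'s k-th play (k = 0,1,...) observes state [w i k] of
    its own Markov chain.  [run] returns, after [t] slots, the play counts
    T^i(t), the reward sums of each arm, and the total collected reward. *)
Fixpoint run (sel : selector) (r : forall i, S i -> R)
  (w : forall i, nat -> S i) (t : nat) :
  ('I_K -> nat) * ('I_K -> R) * R :=
  match t with
  | 0 => (fun _ => 0%N, fun _ => 0, 0)
  | t.+1 =>
    let: (T, Sm, tot) := run sel r w t in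
    let A := sel t T Sm in
    (fun i => (T i + (i \in A))%N,
     fun i => Sm i + (if i \in A then r i (w i (T i)) else 0),
     tot + \sum_(i in A) r i (w i (T i)))
  end.

Definition Omega (n : nat) := {dffun forall i : 'I_K, {ffun 'I_n.+1 -> S i}}.

Definition path_of n (w : Omega n) : forall i, nat -> S i :=
  fun i k => w i (inord k).

Definition path_prob (Si : finType) (init : Si -> R) (P : Si -> Si -> R) n
  (x : {ffun 'I_n.+1 -> Si}) : R :=
  init (x ord0) * \prod_(k < n) P (x (inord k)) (x (inord k.+1)).

(** Arms are independent. *)
Definition joint_prob (init : forall i, S i -> R)
  (P : forall i, S i -> S i -> R) n (w : Omega n) : R :=
  \prod_(i < K) path_prob (init i) (P i) (w i).

Definition expect (init : forall i, S i -> R) (P : forall i, S i -> S i -> R)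
  n (f : Omega n -> R) : R :=
  \sum_(w : Omega n) joint_prob init P w * f w.

Definition plays (sel : selector) (r : forall i, S i -> R) n (i : 'I_K)
  (w : Omega n) : R := ((run sel r (path_of w) n).1.1 i)%:R.

Definition total_reward (sel : selector) (r : forall i, S i -> R) n
  (w : Omega n) : R := (run sel r (path_of w) n).2.

Definition regret (M : nat) (mu : 'I_K -> R) (init : forall i, S i -> R)
  (P : forall i, S i -> S i -> R) (sel : selector) (r : forall i, S i -> R)
  (n : nat) : R :=
  n%:R * (\sum_(j < K | (j < M)%N) mu j) - expect init P (total_reward sel r (n:=n)).

End Bandit.

(* Main.v *)
Require Import Defs.
From HB Require Import structures.
From mathcomp Require Import all_boot all_order all_algebra.
From mathcomp Require Import reals exp.
From mathcomp Require Import zify ring.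
From Stdlib Require Import FunctionalExtensionality ClassicalEpsilon.
Import Order.TTheory GRing.Theory Num.Theory.
Local Open Scope ring_scope.

Module PA.
Set Implicit Arguments. Unset Strict Implicit. Unset Printing Implicit Defensive.

Section Poisson.
Variable R : realType.
Variable S : finType.
Variable P : S -> S -> R.
Hypothesis Pst : stochastic P.
Hypothesis Pirr : irreducible P.

Lemma mpow_ge0 k x y : 0 <= mpow P k x y.
Proof.
elim: k x y => [|k IH] x y /=; first by rewrite ler0n.
apply: sumr_ge0 => z _; apply: mulr_ge0 => //; exact: Pst.1.
Qed.

Lemma harmonic_const (v : S -> R) :
  (forall x, v x = \sum_y P x y * v y) -> forall x y, v x = v y.
Proof.
move=> Hv x0 y0.
pose xm := [arg max_(i > x0) v i]%O.
have Hmax : forall y, v y <= v xm.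
  rewrite /xm; case: arg_maxP => // i _ Hi y; exact: Hi.
have key : forall k y, 0 < mpow P k xm y -> v y = v xm.
  elim=> [|k IH] y /=.
    by case: eqP => [->//|_]; rewrite ltxx.
  move=> Hs.
  have [z Hz] : exists z, 0 < mpow P k xm z * P z y.
    case: (boolP [exists z, 0 < mpow P k xm z * P z y]) => [/existsP //|/existsPn Hn].
    move: Hs; rewrite ltNge sumr_le0 // => z _.
    by have := Hn z; rewrite -leNgt.
  have Hk : 0 < mpow P k xm z.
    rewrite lt_def mpow_ge0 andbT; apply/eqP => E; move: Hz; by rewrite E mul0r ltxx.
  have Pzy : 0 < P z y.
    rewrite lt_def Pst.1 andbT; apply/eqP => E; move: Hz; by rewrite E mulr0 ltxx.
  have vz := IH z Hk.
  have H0 : \sum_a P z a * (v z - v a) = 0.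
    under eq_bigr do rewrite mulrBr.
    by rewrite sumrB -Hv -big_distrl /= Pst.2 mul1r subrr.
  have Hge : forall a, predT a -> 0 <= P z a * (v z - v a).
    by move=> a _; apply: mulr_ge0; [exact: Pst.1| rewrite subr_ge0 vz Hmax].
  have := @psumr_eq0P _ _ predT (fun a => P z a * (v z - v a)) Hge H0 y isT.
  move/eqP; rewrite mulf_eq0 (gt_eqF Pzy) /= subr_eq0 => /eqP <- //.
have [k Hk] := Pirr xm x0; have [k' Hk'] := Pirr xm y0.
by rewrite (key _ _ Hk) (key _ _ Hk').
Qed.

Lemma sumS (F : S -> R) : \sum_x F x = \sum_(i < #|S|) F (enum_val i).
Proof. by rewrite (reindex (@enum_val S predT)) //; exact: (onW_bij _ (@enum_val_bij S)). Qed.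

Lemma poisson (pi g : S -> R) : stationary P pi -> \sum_x pi x * g x = 0 ->
  exists h : S -> R, forall x, g x = h x - \sum_y P x y * h y.
Proof.
move=> [[pi0 pi1] pist] gpi.
set N := #|S|.
have N0 : (0 < N)%N.
  rewrite lt0n; apply/negP => /eqP/card0_eq E; move: pi1.
  by rewrite big_pred0 => [/eqP|x]; [rewrite eq_sym oner_eq0|exact: E].
pose i0 : 'I_N := Ordinal N0.
pose e : 'I_N -> S := enum_val.
pose B : 'M[R]_N := \matrix_(a, b) ((a == b)%:R - P (e b) (e a)).
pose piT : 'cV[R]_N := \col_a pi (e a).
pose gv : 'rV[R]_N := \row_b g (e b).
pose ones : 'rV[R]_N := const_mx 1.
have Bpi : B *m piT = 0.
  apply/matrixP => a j; rewrite !mxE.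
  under eq_bigr do rewrite !mxE mulrBl.
  rewrite sumrB (bigD1 a) //= eqxx mul1r big1 ?addr0; last first.
    by move=> b /negPf; rewrite eq_sym => ->; rewrite mul0r.
  rewrite -{1}pist sumS; apply/eqP; rewrite subr_eq0; apply/eqP/eq_bigr => b _; by rewrite mulrC.
have onesB : ones *m B = 0.
  apply/matrixP => j b; rewrite !mxE.
  under eq_bigr do rewrite !mxE mul1r.
  rewrite sumrB (bigD1 b) //= eqxx big1 ?addr0; last first.
    by move=> a /negPf ->.
  by rewrite -sumS Pst.2 subrr.
have kerB : (kermx B <= ones)%MS.
  apply/row_subP => i.
  set u := row i (kermx B).
  have uB : u *m B = 0 by apply/sub_kermxP; rewrite row_sub.
  clearbody u.
  pose v x := u 0 (enum_rank x).
  have Hv : forall x, v x = \sum_y P x y * v y.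
    move=> x; have := congr1 (fun M : 'M[R]_(_,N) => M 0 (enum_rank x)) uB; rewrite !mxE.
    under eq_bigr do rewrite !mxE mulrBr.
    rewrite sumrB (bigD1 (enum_rank x)) //= eqxx mulr1 big1 ?addr0; last first.
      by move=> a /negPf; rewrite eq_sym => ->; rewrite mulr0.
    move/eqP; rewrite subr_eq0 => /eqP; rewrite -/(v x) => ->; rewrite sumS.
    apply: eq_bigr => a _; rewrite /e enum_rankK /v enum_valK mulrC //.
  have -> : u = (u 0 i0) *: ones.
    apply/rowP => a; rewrite !mxE mulr1.
    have := harmonic_const Hv (e a) (e i0); by rewrite /v /e !enum_valK.
  exact: scalemx_sub.
have ones_ker : (ones <= kermx B)%MS by apply/sub_kermxP.
have rk1 : \rank ones = 1%N.
  rewrite rank_rV; suff -> : ones != 0 by []; apply/eqP => E; have := congr1 (fun M : 'M[R]_(_,N) => M 0 i0) E.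
  by rewrite !mxE => /eqP; rewrite oner_eq0.
have rkK : \rank (kermx B) = 1%N.
  apply/eqP; rewrite eqn_leq -{1}rk1 mxrankS //= -rk1 mxrankS //.
have rkB : \rank B = N.-1.
  have := mxrank_ker B; rewrite rkK => H.
  have := rank_leq_row B; lia.
have rkpi : \rank piT = 1%N.
  rewrite -mxrank_tr rank_rV; suff -> : piT^T != 0 by []; apply/eqP => E.
  move: pi1; rewrite sumS -/N.
  rewrite big1 => [/eqP|a _]; first by rewrite eq_sym oner_eq0.
  by have := congr1 (fun M : 'M[R]_(_,N) => M 0 a) E; rewrite !mxE.
have rkKpi : \rank (kermx piT) = N.-1 by rewrite mxrank_ker rkpi subn1.
have BK : (B <= kermx piT)%MS by apply/sub_kermxP.
have KB : (kermx piT <= B)%MS.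
  by rewrite -(mxrank_leqif_sup BK).2 rkB rkKpi.
have gK : (gv <= kermx piT)%MS.
  apply/sub_kermxP; apply/matrixP => j k; rewrite !mxE.
  rewrite -[RHS]gpi sumS; by apply: eq_bigr => a _; rewrite !mxE mulrC.
have /submxP [D HD] := submx_trans gK KB.
exists (fun x => D 0 (enum_rank x)) => x.
have := congr1 (fun M : 'M[R]_(_,N) => M 0 (enum_rank x)) HD; rewrite !mxE /e enum_rankK => ->.
under eq_bigr do rewrite !mxE mulrBr.
rewrite sumrB (bigD1 (enum_rank x)) //= eqxx mulr1 big1 ?addr0; last first.
  by move=> a /negPf; rewrite eq_sym => ->; rewrite mulr0.
congr (_ - _); rewrite sumS; apply: eq_bigr => a _.
by rewrite /e enum_rankK enum_valK mulrC.
Qed.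
End Poisson.

End PA.
Import PA.
Unset Implicit Arguments.
Module PB.
Unset Printing Implicit Defensive.

Section Upd.
Variables (R : realType) (K : nat) (S : 'I_K -> finType) (n : nat).
Local Notation Om := (Omega S n).

Definition upd (w : Om) (i : 'I_K) (c : 'I_n.+1) (y : S i) : Om :=
  [ffun j => [ffun l => match i =P j with
     | ReflectT e => if l == c then eq_rect i S y j e else w j l
     | ReflectF _ => w j l end]].

Arguments upd w i c y : clear implicits.
Lemma upd_eq w i c y : upd w i c y i c = y.
Proof.
rewrite /upd !ffunE; case: eqP => // e; rewrite eqxx.
by rewrite (eq_irrelevance e erefl).
Qed.

Lemma upd_neq w i c y j l : (j != i) || (l != c) -> upd w i c y j l = w j l.
Proof.
rewrite /upd !ffunE; case: eqP => // e; subst j; rewrite eqxx /= => /negPf -> //.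
Qed.

Lemma upd_id w i c : upd w i c (w i c) = w.
Proof.
apply/ffunP => j; apply/ffunP => l.
case: (boolP ((j != i) || (l != c))) => [H|]; first exact: upd_neq.
rewrite negb_or !negbK => /andP [/eqP ej /eqP el]; subst j l; exact: upd_eq.
Qed.

Lemma upd_upd w i c y z : upd (upd w i c y) i c z = upd w i c z.
Proof.
apply/ffunP => j; apply/ffunP => l.
case: (boolP ((j != i) || (l != c))) => [H|].
  by rewrite !upd_neq.
rewrite negb_or !negbK => /andP [/eqP ej /eqP el]; subst j l; by rewrite !upd_eq.
Qed.

Lemma sum_upd (F : Om -> R) i c (a : S i) :
  \sum_w F w = \sum_(w : Om) (w i c == a)%:R * \sum_b F (upd w i c b).
Proof.
pose f := fun w : Om => w i c.
rewrite (partition_big f predT) //=.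
under [RHS]eq_bigr do rewrite big_distrr.
rewrite [RHS]exchange_big /=; apply: eq_bigr => b _.
rewrite (reindex_onto (fun w => upd w i c b) (fun w => upd w i c a)); last first.
  by move=> w /eqP <-; rewrite upd_upd upd_id.
rewrite big_mkcond /=; apply: eq_bigr => w _.
rewrite /f upd_eq eqxx /= upd_upd.
case: (boolP (w i c == a)) => [/eqP <-|H]; first by rewrite upd_id eqxx mul1r.
rewrite mul0r; case: eqP => // E; move: H; by rewrite -E upd_eq eqxx.
Qed.

Lemma upd_other w i c y j : j != i -> upd w i c y j = w j.
Proof. by move=> H; apply/ffunP => l; rewrite upd_neq // H. Qed.

Definition indep (F : Om -> R) i c := forall w y, F (upd w i c y) = F w.

Lemma elim1 (Phi : Om -> R) i c (Q : Om -> S i -> R) (a : S i) :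
  indep Phi i c -> (forall w y b, Q (upd w i c y) b = Q w b) ->
  (forall w, \sum_b Q w b = 1) ->
  \sum_(w : Om) Phi w * Q w (w i c) = \sum_(w : Om) (w i c == a)%:R * Phi w.
Proof.
move=> HP HQ H1; rewrite (sum_upd _ i c a); apply: eq_bigr => w _; congr (_ * _).
under eq_bigr do rewrite HP HQ upd_eq.
by rewrite -big_distrr /= H1 mulr1.
Qed.

Lemma elim0 (Phi : Om -> R) i c (Q : Om -> S i -> R) (a : S i) :
  indep Phi i c -> (forall w y b, Q (upd w i c y) b = Q w b) ->
  (forall w, \sum_b Q w b = 0) ->
  \sum_(w : Om) Phi w * Q w (w i c) = 0.
Proof.
move=> HP HQ H0; rewrite (sum_upd _ i c a); apply: big1 => w _.
under eq_bigr do rewrite HP HQ upd_eq.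
by rewrite -big_distrr /= H0 !mulr0.
Qed.


Variables (sel : selector R K) (r : forall i, S i -> R).

Lemma run_step (w : forall i, nat -> S i) t :
  run sel r w t.+1 =
  let: (T, Sm, tot) := run sel r w t in
    let A := sel t T Sm in
    (fun i => (T i + (i \in A))%N,
     fun i => Sm i + (if i \in A then r i (w i (T i)) else 0),
     tot + \sum_(i in A) r i (w i (T i))).
Proof. reflexivity. Qed.

Lemma T_step w t i :
  (run sel r w t.+1).1.1 i =
  ((run sel r w t).1.1 i + (i \in sel t (run sel r w t).1.1 (run sel r w t).1.2))%N.
Proof. by rewrite run_step; case: (run sel r w t) => [[T Sm] tot]. Qed.

Lemma T_le w t i : ((run sel r w t).1.1 i <= t)%N.
Proof.
elim: t => [//|t IH]; rewrite T_step.
case: (_ \in _); rewrite ?addn1 ?addn0 //; exact: leqW.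
Qed.

Lemma Sm_eq w t i :
  (run sel r w t).1.2 i = \sum_(0 <= m < (run sel r w t).1.1 i) r i (w i m).
Proof.
elim: t => [|t IH]; first by rewrite big_geq.
rewrite run_step; move: IH; case: (run sel r w t) => [[T Sm] tot] /= ->.
case: (i \in _); last by rewrite addn0 addr0.
by rewrite addn1 big_nat_recr.
Qed.

Lemma tot_eq w t : (run sel r w t).2 = \sum_i (run sel r w t).1.2 i.
Proof.
elim: t => [|t IH]; first by rewrite big1.
rewrite run_step; move: IH; case: (run sel r w t) => [[T Sm] tot] /= ->.
rewrite big_split /=; congr (_ + _).
by rewrite big_mkcond.
Qed.

Lemma run_agree (w1 w2 : forall j, nat -> S j) i k :
  (forall j m, (j != i) || (m <= k)%N -> w1 j m = w2 j m) ->
  forall t, run sel r w1 t = run sel r w2 t \/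
    ((k < (run sel r w1 t).1.1 i)%N /\ (k < (run sel r w2 t).1.1 i)%N).
Proof.
move=> Hw; elim=> [|t [E|[H1 H2]]]; first by left.
- case: (boolP ((i \in sel t (run sel r w1 t).1.1 (run sel r w1 t).1.2) && (k < (run sel r w1 t).1.1 i)%N)).
    move=> /andP [Hi Hk]; right; rewrite !T_step -E Hi; split; exact: ltn_addr.
  move=> Hn; left; rewrite !run_step -E.
  case: (run sel r w1 t) Hn => [[T Sm] tot] /= Hn.
  have Hj : forall j, j \in sel t T Sm -> w1 j (T j) = w2 j (T j).
    move=> j Hj; apply: Hw; case: (eqVneq j i) => [ej|//]; subst j.
    by move: Hn; rewrite Hj /= -leqNgt.
  congr (_, _, _).
    apply: functional_extensionality => j.
    by case: (boolP (j \in _)) => // /Hj ->.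
  by congr (_ + _); apply: eq_bigr => j /Hj ->.
- right; rewrite !T_step; split; exact: ltn_addr.
Qed.

Lemma run_agree_T (w1 w2 : forall j, nat -> S j) i k t :
  (forall j m, (j != i) || (m <= k)%N -> w1 j m = w2 j m) ->
  (k < (run sel r w1 t).1.1 i)%N = (k < (run sel r w2 t).1.1 i)%N.
Proof.
move=> Hw; case: (run_agree w1 w2 i k Hw t) => [->//|[-> ->]] //.
Qed.

Variable a0 : forall j, S j.

Definition xx (w : Om) (i : 'I_K) (m : nat) : S i := w i (inord m).

Lemma xx_upd (w : Om) i c y m : (m <= n)%N -> m != val c -> xx (upd w i c y) i m = xx w i m.
Proof.
move=> Hm Hc; rewrite /xx upd_neq //; apply/orP; right.
by apply: contra Hc => /eqP <-; rewrite /= inordK.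
Qed.

Lemma xx_upd_other w i c y j m : j != i -> xx (upd w i c y) j m = xx w j m.
Proof. by move=> H; rewrite /xx upd_other. Qed.

Lemma val_inord m : (m <= n)%N -> val (inord m : 'I_n.+1) = m.
Proof. by move=> H; apply: inordK. Qed.

Lemma massM i (ini : S i -> R) (Pi : S i -> S i -> R) :
  stochastic Pi -> distribution ini ->
  forall l, (l <= n)%N -> forall Phi : Om -> R,
  (forall c : 'I_n.+1, (c <= l)%N -> indep Phi i c) ->
  \sum_w Phi w * (ini (xx w i 0) * \prod_(0 <= m < l) Pi (xx w i m) (xx w i m.+1))
  = \sum_w Phi w * \prod_(0 <= m < l.+1) (xx w i m == a0 i)%:R.
Proof.
move=> [P0 P1] [i0 i1]; elim=> [|l IH] Hl Phi HPhi.
  under eq_bigr do rewrite big_geq // mulr1.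
  rewrite (elim1 Phi i (inord 0) (fun _ b => ini b) (a0 i)) //.
  - by apply: eq_bigr => w _; rewrite big_nat1 mulrC.
  - by apply: HPhi; rewrite val_inord.
set c : 'I_n.+1 := inord l.+1.
have vc : val c = l.+1 by rewrite val_inord.
have Hc : indep Phi i c by apply: HPhi; rewrite vc.
transitivity (\sum_(w : Om) (Phi w * (ini (xx w i 0) * \prod_(0 <= m < l) Pi (xx w i m) (xx w i m.+1)))
    * (fun w b => Pi (xx w i l) b) w (w i c)).
  by apply: eq_bigr => w _; rewrite big_nat_recr //= !mulrA.
rewrite (elim1 (fun w => Phi w * (ini (xx w i 0) * \prod_(0 <= m < l) Pi (xx w i m) (xx w i m.+1)))
  i c (fun w b => Pi (xx w i l) b) (a0 i)); first last.
- by move=> w; apply: P1.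
- move=> w y b; rewrite xx_upd //; [exact: ltnW | by rewrite vc neq_ltn ltnSn].
- move=> w y; rewrite Hc; congr (_ * (_ * _)).
    by rewrite xx_upd // vc.
  apply: eq_big_nat => m /andP [_ Hm]; rewrite !xx_upd ?vc //; lia.
transitivity (\sum_(w : Om) ((w i c == a0 i)%:R * Phi w) *
   (ini (xx w i 0) * \prod_(0 <= m < l) Pi (xx w i m) (xx w i m.+1))).
  by apply: eq_bigr => w _; rewrite mulrA.
rewrite IH; first last.
- move=> c' Hc' w y; rewrite HPhi; last lia.
  rewrite upd_neq // orbC; apply/orP; left; apply/eqP => E.
  have H1 : nat_of_ord c' = l.+1 by rewrite -vc E.
  lia.
- exact: ltnW.
apply: eq_bigr => w _; rewrite [in RHS]big_nat_recr //=.
rewrite /xx -/c; ring.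
Qed.

Lemma zeroZ i (Pi : S i -> S i -> R) (h : S i -> R) k :
  stochastic Pi -> forall d, (k.+1 + d <= n)%N -> forall Phi : Om -> R,
  (forall c : 'I_n.+1, (k < c <= k.+1 + d)%N -> indep Phi i c) ->
  \sum_w Phi w * ((Pi (xx w i k) (xx w i k.+1) *
      (h (xx w i k.+1) - \sum_y Pi (xx w i k) y * h y)) *
      \prod_(k.+1 <= m < k.+1 + d) Pi (xx w i m) (xx w i m.+1)) = 0.
Proof.
move=> [P0 P1]; elim=> [|d IH] Hd Phi HPhi.
  under eq_bigr do rewrite addn0 big_geq // mulr1.
  set c : 'I_n.+1 := inord k.+1.
  have vc : val c = k.+1 by rewrite val_inord // -(addn0 k.+1).
  apply: (elim0 Phi i c (fun w b => Pi (xx w i k) b * (h b - \sum_y Pi (xx w i k) y * h y)) (a0 i)).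
  - by apply: HPhi; rewrite vc; lia.
  - move=> w y b; rewrite xx_upd //; [lia | by rewrite vc neq_ltn ltnSn].
  - move=> w; under eq_bigr do rewrite mulrBr.
    by rewrite sumrB -big_distrl /= P1 mul1r subrr.
set c : 'I_n.+1 := inord (k.+1 + d).+1.
have vc : val c = (k.+1 + d).+1 by rewrite val_inord // -addnS.
have Hc : indep Phi i c by apply: HPhi; rewrite vc; lia.
pose Psi := fun w : Om => Phi w * ((Pi (xx w i k) (xx w i k.+1) *
      (h (xx w i k.+1) - \sum_y Pi (xx w i k) y * h y)) *
      \prod_(k.+1 <= m < k.+1 + d) Pi (xx w i m) (xx w i m.+1)).
transitivity (\sum_(w : Om) Psi w * (fun w b => Pi (xx w i (k.+1 + d)) b) w (w i c)).
  apply: eq_bigr => w _; rewrite /Psi addnS big_nat_recr /=; last lia.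
  by rewrite !mulrA.
rewrite (elim1 Psi i c (fun w b => Pi (xx w i (k.+1 + d)) b) (a0 i)); first last.
- by move=> w; apply: P1.
- move=> w y b; rewrite xx_upd //; [lia | by rewrite vc neq_ltn ltnSn].
- move=> w y; rewrite /Psi Hc; congr (_ * (_ * _ * _)).
  + rewrite !xx_upd ?vc //; lia.
  + rewrite !xx_upd ?vc //; lia.
  + apply: eq_big_nat => m /andP [_ Hm]; rewrite !xx_upd ?vc //; lia.
transitivity (\sum_(w : Om) ((w i c == a0 i)%:R * Phi w) * ((Pi (xx w i k) (xx w i k.+1) *
      (h (xx w i k.+1) - \sum_y Pi (xx w i k) y * h y)) *
      \prod_(k.+1 <= m < k.+1 + d) Pi (xx w i m) (xx w i m.+1))).
  by apply: eq_bigr => w _; rewrite /Psi mulrA.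
apply: IH; first lia.
move=> c' Hc' w y; rewrite HPhi; last lia.
rewrite upd_neq // orbC; apply/orP; left; apply/eqP => E.
have H1 : nat_of_ord c' = (k.+1 + d).+1 by rewrite -vc E.
lia.
Qed.

Definition Ind (j : 'I_K) (w : Om) : R := \prod_(0 <= m < n.+1) (xx w j m == a0 j)%:R.
Lemma pp_eq (init : forall j, S j -> R) (P : forall j, S j -> S j -> R) j (w : Om) :
  path_prob (init j) (P j) (w j) =
  init j (xx w j 0) * \prod_(0 <= m < n) P j (xx w j m) (xx w j m.+1).
Proof.
rewrite /path_prob big_mkord; congr (_ * _).
by rewrite /xx; congr (init j (w j _)); apply: val_inj; rewrite /= inordK.
Qed.

Lemma Ind_sum : \sum_(w : Om) \prod_(j < K) Ind j w = 1.
Proof.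
pose w0 : Om := [ffun j => [ffun _ => a0 j]].
transitivity (\sum_(w : Om) (w == w0)%:R : R).
  apply: eq_bigr => w _; case: (eqVneq w w0) => [->|Hne].
    apply: big1 => j _; apply: big1 => m _; by rewrite /xx !ffunE eqxx.
  have : ~~ [forall j, [forall l, w j l == a0 j]].
    apply: contra Hne => /forallP H; apply/eqP/ffunP => j; apply/ffunP => l.
    by rewrite !ffunE; apply/eqP; exact: (forallP (H j) l).
  rewrite negb_forall => /existsP [j]; rewrite negb_forall => /existsP [l Hl].
  have Hl' : val l \in index_iota 0 n.+1 by rewrite mem_index_iota ltn_ord.
  rewrite (bigD1 j) //= /Ind (bigD1_seq (val l) Hl' (iota_uniq _ _)) /=.
  by rewrite /xx inord_val (negPf Hl) !mul0r.
rewrite (eq_bigr (fun w => if w == w0 then 1 else 0)); last by move=> w _; case: eqP.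
by rewrite -big_mkcond big_pred1_eq.
Qed.

Lemma joint_one (init : forall j, S j -> R) (P : forall j, S j -> S j -> R) :
  (forall j, stochastic (P j)) -> (forall j, distribution (init j)) ->
  \sum_(w : Om) joint_prob init P w = 1.
Proof.
move=> HP Hi.
have step : forall J, (J <= K)%N -> \sum_(w : Om) \prod_(j < K)
    (if (j < J)%N then Ind j w else path_prob (init j) (P j) (w j)) =
    \sum_(w : Om) joint_prob init P w.
  elim=> [|J IH] HJ.
    by apply: eq_bigr => w _; rewrite /joint_prob; apply: eq_bigr => j _.
  rewrite -IH; last exact: ltnW.
  pose jj : 'I_K := Ordinal HJ.
  pose Rest := fun w : Om => \prod_(j < K | j != jj)
    (if (j < J)%N then Ind j w else path_prob (init j) (P j) (w j)).
  transitivity (\sum_(w : Om) Rest w * Ind jj w).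
    apply: eq_bigr => w _; rewrite (bigD1 jj) //= ltnSn mulrC /Rest; congr (_ * _).
    apply: eq_bigr => j Hj; rewrite ltnS leq_eqVlt.
    suff -> : (nat_of_ord j == J) = false by [].
    by apply/negP => /eqP E; move: Hj; rewrite (_ : j = jj) ?eqxx //; apply: val_inj.
  transitivity (\sum_(w : Om) Rest w * path_prob (init jj) (P jj) (w jj)); last first.
    by apply: eq_bigr => w _; rewrite [in RHS](bigD1 jj) //= ltnn [in RHS]mulrC.
  under [RHS]eq_bigr do rewrite pp_eq.
  rewrite (massM jj (init jj) (P jj) (HP jj) (Hi jj) n (leqnn n) Rest) //.
  move=> c _ w y; rewrite /Rest; apply: eq_bigr => j Hj.
  case: (j < J)%N.
    by apply: eq_bigr => m _; rewrite xx_upd_other.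
  by rewrite upd_other.
rewrite -(step K (leqnn K)).
rewrite -[RHS]Ind_sum; apply: eq_bigr => w _; apply: eq_bigr => j _; by rewrite ltn_ord.
Qed.

Lemma joint_ge0 (init : forall j, S j -> R) (P : forall j, S j -> S j -> R) :
  (forall j, stochastic (P j)) -> (forall j, distribution (init j)) ->
  forall w : Om, 0 <= joint_prob init P w.
Proof.
move=> HP Hi w; apply: prodr_ge0 => j _; apply: mulr_ge0; first exact: (Hi j).1.
by apply: prodr_ge0 => m _; exact: (HP j).1.
Qed.

Lemma expect_bound (init : forall j, S j -> R) (P : forall j, S j -> S j -> R) (f : Om -> R) B :
  (forall j, stochastic (P j)) -> (forall j, distribution (init j)) ->
  (forall w, `|f w| <= B) -> `|expect init P f| <= B.
Proof.
move=> HP Hi Hf; rewrite /expect.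
apply: le_trans (ler_norm_sum _ _ _) _.
apply: le_trans (_ : \sum_(w : Om) joint_prob init P w * B <= B).
  apply: ler_sum => w _; rewrite normrM ger0_norm ?joint_ge0 //.
  by apply: ler_wpM2l; [exact: joint_ge0|exact: Hf].
by rewrite -big_distrl /= joint_one // mul1r.
Qed.

Lemma expectB (init : forall j, S j -> R) (P : forall j, S j -> S j -> R) (f g : Om -> R) :
  expect init P (fun w => f w - g w) = expect init P f - expect init P g.
Proof. by rewrite /expect -sumrB; apply: eq_bigr => w _; rewrite mulrBr. Qed.

Lemma expectD (init : forall j, S j -> R) (P : forall j, S j -> S j -> R) (f g : Om -> R) :
  expect init P (fun w => f w + g w) = expect init P f + expect init P g.
Proof. by rewrite /expect -big_split; apply: eq_bigr => w _; rewrite mulrDr. Qed.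

Lemma expect_sum (init : forall j, S j -> R) (P : forall j, S j -> S j -> R)
  (I : finType) (F : I -> Om -> R) :
  expect init P (fun w => \sum_(m : I) F m w) = \sum_(m : I) expect init P (F m).
Proof.
rewrite /expect exchange_big /=; apply: eq_bigr => w _; by rewrite big_distrr.
Qed.

Lemma arm_bound (init : forall j, S j -> R) (P : forall j, S j -> S j -> R) i
  (h : S i -> R) (mu : R) :
  (forall j, stochastic (P j)) -> (forall j, distribution (init j)) ->
  (forall x, r i x - mu = h x - \sum_y P i x y * h y) ->
  `| expect init P (fun w : Om => (run sel r (path_of w) n).1.2 i
        - mu * ((run sel r (path_of w) n).1.1 i)%:R) | <= 2 * \sum_x `|h x|.
Proof.
move=> HP Hi Hh.
pose T := fun w : Om => (run sel r (path_of w) n).1.1 i.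
pose D := fun (m : nat) (w : Om) => h (xx w i m.+1) - \sum_y P i (xx w i m) y * h y.
have Hpt : forall w : Om, (run sel r (path_of w) n).1.2 i - mu * (T w)%:R =
    (h (xx w i 0) - h (xx w i (T w))) + \sum_(m < n) (m < T w)%:R * D m w.
  move=> w; rewrite Sm_eq -/(T w).
  have HT : (T w <= n)%N by apply: T_le.
  rewrite [X in _ - X](_ : _ = \sum_(0 <= m < T w) mu); last first.
    by rewrite sumr_const_nat subn0 mulr_natr.
  rewrite -sumrB.
  transitivity (\sum_(0 <= m < T w) ((h (xx w i m) - h (xx w i m.+1)) + D m w)).
    apply: eq_bigr => m _; rewrite Hh /D /xx /path_of; ring.
  rewrite big_split /=; congr (_ + _).
    rewrite -[LHS]opprK -sumrN.
    under eq_bigr do rewrite opprB.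
    by rewrite (telescope_sumr (fun m => h (xx w i m))) // opprB.
  rewrite -(big_mkord xpredT (fun m => (m < T w)%:R * D m w)).
  rewrite (big_cat_nat (leq0n (T w)) HT) /=.
  rewrite [X in _ + X]big_nat_cond [X in _ + X]big1 ?addr0; last first.
    by move=> m /andP [/andP [Hm _] _]; rewrite ltnNge Hm mul0r.
  by apply: eq_big_nat => m /andP [_ Hm]; rewrite Hm mul1r.
have -> : (fun w : Om => (run sel r (path_of w) n).1.2 i
        - mu * ((run sel r (path_of w) n).1.1 i)%:R) =
   (fun w => (h (xx w i 0) - h (xx w i (T w))) + \sum_(m < n) (m < T w)%:R * D m w).
  by apply: functional_extensionality => w; rewrite -Hpt.
rewrite expectD expect_sum big1 ?addr0; last first.
  move=> m _.
  pose Phi := fun w : Om => (m < T w)%:R * (\prod_(j < K | j != i) path_prob (init j) (P j) (w j))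
     * (init i (xx w i 0) * \prod_(0 <= m' < m) P i (xx w i m') (xx w i m'.+1)).
  have Hd : (m.+1 + (n - m.+1) <= n)%N by rewrite subnKC.
  have := zeroZ i (P i) h m (HP i) (n - m.+1) Hd Phi.
  rewrite (subnKC (ltn_ord m)) => <-.
    rewrite /expect; apply: eq_bigr => w _.
    rewrite /joint_prob (bigD1 i) //= pp_eq.
    rewrite (big_cat_nat (leq0n m) (ltnW (ltn_ord m))) /= (big_ltn (ltn_ord m)) /=.
    rewrite /Phi /D; ring.
  move=> c /andP [Hc1 Hc2] w y; rewrite /Phi /T.
  congr (_ * _ * (_ * _)).
  - congr ((_ : bool)%:R).
    apply: run_agree_T => j m' /orP [Hj|Hm'].
      by rewrite /path_of upd_other.
    case: (eqVneq j i) => [->|Hj]; last by rewrite /path_of upd_other.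
    move: (ltn_ord m) => Hmn; apply: xx_upd; [lia | change (m' != nat_of_ord c); lia].
  - by apply: eq_bigr => j Hj; rewrite upd_other.
  - by rewrite xx_upd //; change (0 != nat_of_ord c); lia.
  - move: (ltn_ord m) => Hmn.
    by apply: eq_big_nat => m' /andP [_ Hm']; rewrite !xx_upd //;
      first [lia | change (m'.+1 != nat_of_ord c); lia | change (m' != nat_of_ord c); lia].
apply: expect_bound => // w.
apply: le_trans (ler_normB _ _) _.
have Hb : forall a, `|h a| <= \sum_x `|h x|.
  by move=> a; rewrite (bigD1 a) //= lerDl sumr_ge0.
by rewrite mulr2n mulrDl mul1r lerD.
Qed.
End Upd.
Arguments expect_sum {R K S n} init P I F.
Arguments expectB {R K S n} init P f g.
Arguments arm_bound {R K S n sel r} a0 init P i h mu _ _ _.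
Arguments tot_eq {R K S} sel r w t.

End PB.
Import PB.

Theorem lemma4 (R : realType) (K M : nat) (S : 'I_K -> finType)
  (P : forall i, S i -> S i -> R) (r : forall i, S i -> R)
  (pi : forall i, S i -> R) :
  (0 < M <= K)%N ->
  (forall i, stochastic (P i)) ->
  (forall i, irreducible (P i)) ->
  (forall i, aperiodic (P i)) ->
  (forall i, stationary (P i) (pi i)) ->
  (forall i j : 'I_K, (i <= j)%N ->
     mean_reward (r j) (pi j) <= mean_reward (r i) (pi i)) ->
  (forall i j : 'I_K, (i < M)%N -> (M <= j)%N ->
     mean_reward (r j) (pi j) < mean_reward (r i) (pi i)) ->
  exists C : R,
    forall (L : R), 0 < L ->
    forall (sched : 'I_K -> {set 'I_K}) (sel : selector R K),
      is_UCB_M M L sched sel ->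
    forall init : forall i, S i -> R, (forall i, distribution (init i)) ->
    forall n : nat,
      let mu := fun i => mean_reward (r i) (pi i) in
      `| regret M mu init P sel r n
         - (n%:R * (\sum_(j < K | (j < M)%N) mu j)
            - \sum_(i < K) mu i * expect init P (plays sel r (n:=n) i)) | <= C.
Proof.
move=> _ HP Hirr _ Hst _ _.
have Hh : forall i, exists h : S i -> R, forall x,
    r i x - mean_reward (r i) (pi i) = h x - \sum_y P i x y * h y.
  move=> i; apply: (poisson (HP i) (Hirr i) (Hst i)).
  rewrite /mean_reward.
  under eq_bigr do rewrite mulrBr.
  rewrite sumrB -big_distrl /= (Hst i).1.2 mul1r; apply/eqP; rewrite subr_eq0; apply/eqP.
  by apply: eq_bigr => x _; rewrite mulrC.
pose hh i := proj1_sig (constructive_indefinite_description _ (Hh i)).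
have Hhh i := proj2_sig (constructive_indefinite_description _ (Hh i)).
exists (\sum_i 2 * \sum_x `|hh i x|).
move=> L HL sched sel Hu init Hinit n.
suff key : forall mu : 'I_K -> R, (forall i x, r i x - mu i = hh i x - \sum_y P i x y * hh i y) ->
  `| regret M mu init P sel r n
         - (n%:R * (\sum_(j < K | (j < M)%N) mu j)
            - \sum_(i < K) mu i * expect init P (plays sel r (n:=n) i)) | <= \sum_i 2 * \sum_x `|hh i x|.
  exact: (key (fun i => mean_reward (r i) (pi i)) Hhh).
move=> mu Hmu.
have a0 : forall j, S j.
  move=> j; have H : (0 < #|S j|)%N.
    rewrite lt0n; apply/negP => /eqP/card0_eq E; move: (Hinit j).2.
    by rewrite big_pred0 => [/eqP|x]; [rewrite eq_sym oner_eq0|exact: E].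
  exact: (enum_val (Ordinal H)).
have Etot : expect init P (total_reward sel r (n:=n)) =
    \sum_i expect init P (fun w : Omega S n => (run sel r (path_of w) n).1.2 i).
  transitivity (expect init P (fun w : Omega S n => \sum_i (run sel r (path_of w) n).1.2 i)).
    congr expect; apply: functional_extensionality => w.
    by rewrite /total_reward tot_eq.
  exact: (expect_sum init P 'I_K (fun i (w : Omega S n) => (run sel r (path_of w) n).1.2 i)).
have -> : regret M mu init P sel r n
         - (n%:R * (\sum_(j < K | (j < M)%N) mu j)
            - \sum_(i < K) mu i * expect init P (plays sel r (n:=n) i)) =
    - \sum_i expect init P (fun w : Omega S n => (run sel r (path_of w) n).1.2 i
        - mu i * ((run sel r (path_of w) n).1.1 i)%:R).
  rewrite /regret Etot.
  under [in RHS]eq_bigr do rewrite expectB.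
  rewrite sumrB.
  have -> : \sum_i expect init P (fun w : Omega S n => mu i * ((run sel r (path_of w) n).1.1 i)%:R)
      = \sum_(i < K) mu i * expect init P (plays sel r (n:=n) i).
    apply: eq_bigr => i _; rewrite /expect big_distrr /=; apply: eq_bigr => w _.
    by rewrite /plays; ring.
  ring.
rewrite normrN; apply: le_trans (ler_norm_sum _ _ _) _.
apply: ler_sum => i _.
exact: (arm_bound a0 init P i (hh i) (mu i) HP Hinit (Hmu i)).
Qed.
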